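(* Let $a\in\mathbf F^{\uparrow}$ with $\mathrm{supp}(a)=(0,r)$, let $\alpha_0\in(0,r)\cap A$, $\alpha_k=(\alpha_0)a^k$ ($k\in\mathbb Z$), and $b\in\mathbf F^{\uparrow}$ with $\mathrm{supp}(b)=(\alpha_0,\alpha_1)$. Let $G$ be a subgroup of $\mathbf V(r,\mathbb R^*_+,\mathbb R)$ with $G\cap\mathbf F(r,\mathbb R^*_+,\mathbb R)=\mathbf F$. Then $C_G(a)=C_{\mathbf F}(a)$ and $C_G(\{a^{-k}ba^k\mid k\in\mathbb Z\})=C_{\mathbf F}(\{a^{-k}ba^k\mid k\in\mathbb Z\})$.
   Context: Maps act on the right. Fix real $r>0$, a subgroup $\Lambda\neq\{1\}$ of $\mathbb R^*_+$, and an additive subgroup $A\subseteq\mathbb R$ with $r\in A$ and $\lambda A\subseteq A$ for $\lambda\in\Lambda$ (definitions also used with $\Lambda=\mathbb R^*_+$, $A=\mathbb R$). $\mathbf V(r,\Lambda,A)$ is the group of bijections $x\colon[0,r)\to[0,r)$ that are piecewise affine with finitely many breakpoints and discontinuities, right-continuous everywhere, with all slopes in $\Lambda$ and all breakpoints, discontinuity points and their images in $A$; $\mathbf F(r,\Lambda,A)$ is the subgroup of elements continuous for the usual topology; $\mathbf F=\mathbf F(r,\Lambda,A)$. $\mathbf F^{\uparrow}=\{x\in\mathbf F\mid(\gamma)x\ge\gamma\ \forall\gamma\}$; $\mathrm{supp}(x)$ is the set of non-fixed points; $C_G(S)$ is the centralizer of $S$ in $G$. *)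

(* Defs.v *)
From Stdlib Require Import Reals ZArith ClassicalEpsilon.
Open Scope R_scope.

(* The interval [0,r) as a type; maps act on it.  Maps act on the right:
   (t)(x y) = ((t)x)y, i.e. the product x y is the function  fun t => y (x t). *)
Definition I (r : R) : Type := { t : R | 0 <= t < r }.

Definition rmul {r : R} (x y : I r -> I r) : I r -> I r := fun t => y (x t).

Definition is_bij {r : R} (x : I r -> I r) : Prop :=
  exists y : I r -> I r, (forall t, y (x t) = t) /\ (forall t, x (y t) = t).

Definition is_PA (r : R) (Lam A : R -> Prop) (x : I r -> I r) : Prop :=
  exists (n : nat) (p lam c : nat -> R),
    p 0%nat = 0 /\ p n = r /\
    (forall i, (i < n)%nat -> p i < p (S i)) /\
    (forall i, (i <= n)%nat -> A (p i)) /\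
    (forall i, (i < n)%nat -> Lam (lam i)) /\
    (forall i, (i < n)%nat -> A (lam i * p i + c i)) /\
    (forall i, (i < n)%nat -> forall t : I r,
        p i <= proj1_sig t < p (S i) -> proj1_sig (x t) = lam i * proj1_sig t + c i).

Definition inV (r : R) (Lam A : R -> Prop) (x : I r -> I r) : Prop :=
  is_bij x /\ is_PA r Lam A x.

Definition cont_I {r : R} (x : I r -> I r) : Prop :=
  forall t : I r, forall eps, 0 < eps -> exists delta, 0 < delta /\
    forall s : I r, Rabs (proj1_sig s - proj1_sig t) < delta ->
      Rabs (proj1_sig (x s) - proj1_sig (x t)) < eps.

Definition inF (r : R) (Lam A : R -> Prop) (x : I r -> I r) : Prop :=
  inV r Lam A x /\ cont_I x.

Definition Rpos : R -> Prop := fun l => 0 < l.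
Definition Rall : R -> Prop := fun _ => True.

Definition inFup (r : R) (Lam A : R -> Prop) (x : I r -> I r) : Prop :=
  inF r Lam A x /\ forall t : I r, proj1_sig t <= proj1_sig (x t).

Definition subgroupV (r : R) (G : (I r -> I r) -> Prop) : Prop :=
  (forall x, G x -> inV r Rpos Rall x) /\
  G (fun t => t) /\
  (forall x y, G x -> G y -> G (rmul x y)) /\
  (forall x, G x -> exists y, G y /\ rmul x y = (fun t => t) /\ rmul y x = (fun t => t)).

Definition finv {T : Type} (f : T -> T) : T -> T :=
  fun y => epsilon (inhabits y) (fun x => f x = y).

Definition zpow {T : Type} (f : T -> T) (k : Z) : T -> T :=
  match k with
  | Z0 => fun t => t
  | Zpos q => fun t => Nat.iter (Pos.to_nat q) f t
  | Zneg q => fun t => Nat.iter (Pos.to_nat q) (finv f) t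
  end.

Definition commute {r : R} (x y : I r -> I r) : Prop := rmul x y = rmul y x.

Definition supp_eq {r : R} (x : I r -> I r) (lo hi : R) : Prop :=
  forall t : I r, x t <> t <-> (lo < proj1_sig t < hi).

Definition good_Lam (Lam : R -> Prop) : Prop :=
  (forall l, Lam l -> 0 < l) /\ Lam 1 /\
  (forall l m, Lam l -> Lam m -> Lam (l * m)) /\
  (forall l, Lam l -> Lam (/ l)) /\
  (exists l, Lam l /\ l <> 1).

Definition good_A (r : R) (Lam A : R -> Prop) : Prop :=
  A 0 /\ (forall a b, A a -> A b -> A (a + b)) /\ (forall a, A a -> A (- a)) /\
  A r /\ (forall l a, Lam l -> A a -> A (l * a)).

(* Main.v *)
Require Import Defs.
From Stdlib Require Import Reals Lra Lia ZArith ClassicalEpsilon ProofIrrelevance Classical FunctionalExtensionality.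
Open Scope R_scope.

Definition cont_at {r : R} (f : I r -> I r) (t : I r) : Prop :=
  forall eps, 0 < eps -> exists delta, 0 < delta /\
    forall s : I r, Rabs (proj1_sig s - proj1_sig t) < delta ->
      Rabs (proj1_sig (f s) - proj1_sig (f t)) < eps.

Lemma I_eq {r} (x y : I r) : proj1_sig x = proj1_sig y -> x = y.
Proof. destruct x, y; simpl; intros ->; f_equal; apply proof_irrelevance. Qed.

Lemma I_ex {r} (x : R) : 0 <= x < r -> exists u : I r, proj1_sig u = x.
Proof. intros H; exists (exist _ x H); reflexivity. Qed.

Lemma I_bnd {r} (x : I r) : 0 <= proj1_sig x < r.
Proof. exact (proj2_sig x). Qed.

Lemma cont_comp {r} (f g : I r -> I r) t :
  cont_at f t -> cont_at g (f t) -> cont_at (fun s => g (f s)) t.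
Proof.
  intros Hf Hg eps He. destruct (Hg eps He) as [d1 [Hd1 H1]].
  destruct (Hf d1 Hd1) as [d2 [Hd2 H2]]. exists d2; split; auto.
Qed.

Lemma cont_ext {r} (f g : I r -> I r) t :
  (forall s, f s = g s) -> cont_at g t -> cont_at f t.
Proof.
  intros E Hg eps He. destruct (Hg eps He) as [d [Hd H]]. exists d; split; auto.
  intros s Hs. rewrite !E. auto.
Qed.

Lemma cont_id {r} (t : I r) : cont_at (fun s => s) t.
Proof. intros eps He; exists eps; split; auto. Qed.

Definition PAd (r : R) (n : nat) (p lam c : nat -> R) (f : I r -> I r) : Prop :=
  p 0%nat = 0 /\ p n = r /\ (forall i, (i < n)%nat -> p i < p (S i)) /\
  (forall i, (i < n)%nat -> 0 < lam i) /\
  (forall i, (i < n)%nat -> forall t : I r, p i <= proj1_sig t < p (S i) ->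
      proj1_sig (f t) = lam i * proj1_sig t + c i).

Lemma PA_PAd r (Lam A : R -> Prop) f : is_PA r Lam A f -> (forall l, Lam l -> 0 < l) ->
  exists n p lam c, PAd r n p lam c f.
Proof.
  intros (n & p & lam & c & H0 & Hn & Hi & _ & HL & _ & Hf) HLp.
  exists n, p, lam, c; repeat split; auto.
Qed.


Lemma p_le r n p lam c f : PAd r n p lam c f -> forall i j, (i <= j)%nat -> (j <= n)%nat -> p i <= p j.
Proof.
  intros (Hp0 & Hn & Hi & _) i j Hij. induction Hij; intros Hj. lra.
  specialize (IHHij ltac:(lia)). specialize (Hi m ltac:(lia)). lra.
Qed.

Lemma p_lt r n p lam c f : PAd r n p lam c f -> forall i j, (i < j)%nat -> (j <= n)%nat -> p i < p j.
Proof.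
  intros H i j Hij Hj. pose proof (p_le _ _ _ _ _ _ H (S i) j Hij Hj).
  destruct H as (Hp0 & Hn & Hi & _). specialize (Hi i ltac:(lia)). lra.
Qed.

Lemma piece_ex r n p lam c f : PAd r n p lam c f -> forall t : I r,
  exists i, (i < n)%nat /\ p i <= proj1_sig t < p (S i).
Proof.
  intros H t. pose proof (I_bnd t) as Bt.
  assert (forall m, (m <= n)%nat -> proj1_sig t < p m -> exists i, (i < m)%nat /\ p i <= proj1_sig t < p (S i)).
  { induction m; intros Hm Ht. destruct H as [Hp0 _]. lra.
    destruct (Rlt_le_dec (proj1_sig t) (p m)).
    - destruct (IHm ltac:(lia) r0) as [i [Hi1 Hi2]]. exists i; split; [lia|auto].
    - exists m; split; [lia|lra]. }
  destruct (H0 n ltac:(lia)) as [i [Hi1 Hi2]]. destruct H as (_ & Hn & _); lra.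
  exists i; auto.
Qed.

Lemma cont_aux r n p lam c f i t d : PAd r n p lam c f -> (i < n)%nat -> 0 < d ->
  p i <= proj1_sig t < p (S i) ->
  (forall s : I r, Rabs (proj1_sig s - proj1_sig t) < d -> p i <= proj1_sig s < p (S i)) ->
  cont_at f t.
Proof.
  intros H Hi Hd Ht Hs eps He. destruct H as (_ & _ & _ & HL & Hf).
  pose proof (HL i Hi) as Hl.
  exists (Rmin d (eps / lam i)); split.
  { apply Rmin_pos; auto. apply Rdiv_lt_0_compat; auto. }
  intros s Hst. assert (Hst1 := Rlt_le_trans _ _ _ Hst (Rmin_r _ _) ).
  assert (Hst2 := Rlt_le_trans _ _ _ Hst (Rmin_l _ _) ).
  rewrite (Hf i Hi s (Hs s Hst2)), (Hf i Hi t Ht).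
  replace (lam i * proj1_sig s + c i - (lam i * proj1_sig t + c i)) with (lam i * (proj1_sig s - proj1_sig t)) by ring.
  rewrite Rabs_mult, (Rabs_pos_eq (lam i)) by lra.
  apply Rmult_lt_compat_l with (r := lam i) in Hst1; auto.
  replace (lam i * (eps / lam i)) with eps in Hst1 by (field; lra). auto.
Qed.

Lemma cont_interior r n p lam c f i t : PAd r n p lam c f -> (i < n)%nat ->
  p i <= proj1_sig t < p (S i) -> (p i < proj1_sig t \/ proj1_sig t = 0) -> cont_at f t.
Proof.
  intros H Hi Ht Hc. destruct Hc as [Hc|Hc].
  - apply (cont_aux r n p lam c f i t (Rmin (proj1_sig t - p i) (p (S i) - proj1_sig t))); auto.
    apply Rmin_pos; lra.
    intros s Hs. pose proof (Rmin_l (proj1_sig t - p i) (p (S i) - proj1_sig t)).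
    pose proof (Rmin_r (proj1_sig t - p i) (p (S i) - proj1_sig t)).
    apply Rabs_def2 in Hs. lra.
  - apply (cont_aux r n p lam c f i t (p (S i) - proj1_sig t)); auto. lra.
    intros s Hs. pose proof (I_bnd s). apply Rabs_def2 in Hs. lra.
Qed.

Lemma cont_break r n p lam c f i tj : PAd r n p lam c f -> (S i < n)%nat ->
  proj1_sig tj = p (S i) -> lam i * p (S i) + c i = proj1_sig (f tj) -> cont_at f tj.
Proof.
  intros H Hi Htj Hv eps He.
  pose proof (p_lt _ _ _ _ _ _ H i (S i) ltac:(lia) ltac:(lia)) as P1.
  pose proof (p_lt _ _ _ _ _ _ H (S i) (S (S i)) ltac:(lia) ltac:(lia)) as P2.
  destruct H as (_ & _ & _ & HL & Hf).
  pose proof (HL i ltac:(lia)) as L1. pose proof (HL (S i) ltac:(lia)) as L2.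
  set (m := Rmin (p (S i) - p i) (p (S (S i)) - p (S i))).
  assert (Hm : 0 < m) by (apply Rmin_pos; lra).
  pose proof (Rmin_l (p (S i) - p i) (p (S (S i)) - p (S i))) as Hm1.
  pose proof (Rmin_r (p (S i) - p i) (p (S (S i)) - p (S i))) as Hm2.
  fold m in Hm1, Hm2.
  exists (Rmin m (eps / (lam i + lam (S i)))); split.
  { apply Rmin_pos; auto. apply Rdiv_lt_0_compat; lra. }
  intros s Hs. pose proof (Rlt_le_trans _ _ _ Hs (Rmin_l _ _)) as Hs1.
  pose proof (Rlt_le_trans _ _ _ Hs (Rmin_r _ _)) as Hs2.
  assert (Hk : (lam i + lam (S i)) * (eps / (lam i + lam (S i))) = eps) by (field; lra).
  set (e' := eps / (lam i + lam (S i))) in *.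
  assert (He' : 0 < e') by (unfold e'; apply Rdiv_lt_0_compat; lra).
  destruct (Rlt_le_dec (proj1_sig s) (p (S i))).
  - assert (HH := Hf i ltac:(lia) s ltac:(apply Rabs_def2 in Hs1; lra)).
    rewrite HH, <- Hv.
    replace (lam i * proj1_sig s + c i - (lam i * p (S i) + c i)) with (lam i * (proj1_sig s - p (S i))) by ring.
    rewrite Rabs_mult, (Rabs_pos_eq (lam i)) by lra. rewrite Htj in Hs2.
    assert (lam i * Rabs (proj1_sig s - p (S i)) <= lam i * e') by (apply Rmult_le_compat_l; lra).
    assert (lam i * e' < eps) by nra. lra.
  - assert (HH := Hf (S i) ltac:(lia) s ltac:(apply Rabs_def2 in Hs1; lra)).
    assert (HT := Hf (S i) ltac:(lia) tj ltac:(lra)).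
    rewrite HH, HT, Htj.
    replace (lam (S i) * proj1_sig s + c (S i) - (lam (S i) * p (S i) + c (S i))) with (lam (S i) * (proj1_sig s - p (S i))) by ring.
    rewrite Rabs_mult, (Rabs_pos_eq (lam (S i))) by lra. rewrite Htj in Hs2.
    assert (lam (S i) * Rabs (proj1_sig s - p (S i)) <= lam (S i) * e') by (apply Rmult_le_compat_l; lra).
    assert (lam (S i) * e' < eps) by nra. lra.
Qed.

Lemma endval r n p lam c f i tj : PAd r n p lam c f -> (S i < n)%nat ->
  proj1_sig tj = p (S i) -> cont_at f tj -> lam i * p (S i) + c i = proj1_sig (f tj).
Proof.
  intros H Hi Htj Hc.
  pose proof (p_lt _ _ _ _ _ _ H i (S i) ltac:(lia) ltac:(lia)) as P1.
  pose proof (p_le _ _ _ _ _ _ H 0 i ltac:(lia) ltac:(lia)) as P0.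
  destruct H as (Hp0 & _ & _ & HL & Hf). pose proof (HL i ltac:(lia)) as L1.
  apply NNPP; intro Hne.
  set (D := Rabs (lam i * p (S i) + c i - proj1_sig (f tj))).
  assert (HD : 0 < D) by (apply Rabs_pos_lt; lra).
  destruct (Hc (D/2) ltac:(lra)) as [d [Hd Hdd]].
  set (m := Rmin (Rmin d (p (S i) - p i)) (D / (2 * lam i))).
  assert (Hm : 0 < m). { apply Rmin_pos; [apply Rmin_pos; lra|]. apply Rdiv_lt_0_compat; lra. }
  pose proof (Rmin_l (Rmin d (p (S i) - p i)) (D / (2 * lam i))).
  pose proof (Rmin_r (Rmin d (p (S i) - p i)) (D / (2 * lam i))).
  pose proof (Rmin_l d (p (S i) - p i)). pose proof (Rmin_r d (p (S i) - p i)).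
  fold m in H, H0.
  pose proof (I_bnd tj).
  destruct (I_ex (r:=r) (p (S i) - m / 2) ltac:(lra)) as [s Hs].
  assert (Hsd : Rabs (proj1_sig s - proj1_sig tj) < d) by (rewrite Hs, Htj; apply Rabs_def1; lra).
  specialize (Hdd s Hsd). rewrite (Hf i ltac:(lia) s ltac:(lra)) in Hdd.
  assert (H5 : lam i * (m/2) <= lam i * (D / (2 * lam i) / 2)) by (apply Rmult_le_compat_l; lra).
  replace (lam i * (D / (2 * lam i) / 2)) with (D/4) in H5 by (field; lra).
  unfold D in *. rewrite Hs in Hdd.
  replace (lam i * p (S i) + c i - proj1_sig (f tj)) with ((lam i * (p (S i) - m / 2) + c i - proj1_sig (f tj)) + lam i * (m/2)) in * by ring.
  pose proof (Rabs_triang (lam i * (p (S i) - m / 2) + c i - proj1_sig (f tj)) (lam i * (m/2))) as H6.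
  rewrite (Rabs_pos_eq (lam i * (m/2))) in H6 by nra. lra.
Qed.

Lemma mono r n p lam c f : PAd r n p lam c f -> forall s t : I r,
  proj1_sig s <= proj1_sig t ->
  (forall u : I r, proj1_sig s < proj1_sig u <= proj1_sig t -> cont_at f u) ->
  proj1_sig (f s) <= proj1_sig (f t).
Proof.
  intros H s t Hst Hc.
  destruct (piece_ex _ _ _ _ _ _ H s) as [i [Hi Hsi]].
  destruct (piece_ex _ _ _ _ _ _ H t) as [j [Hj Htj]].
  pose proof H as (Hp0 & Hpn & Hinc & HL & Hf).
  destruct (Nat.lt_trichotomy i j) as [Hij|[Hij|Hij]].
  -
    assert (KA : forall k, (i < k)%nat -> (k <= j)%nat -> forall tk : I r, proj1_sig tk = p k ->
               proj1_sig (f s) <= proj1_sig (f tk)).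
    { induction k; intros Hk1 Hk2 tk Htk. lia.
      assert (Hctk : cont_at f tk).
      { apply Hc. split. rewrite Htk. pose proof (p_le _ _ _ _ _ _ H (S i) (S k) ltac:(lia) ltac:(lia)). lra.
        rewrite Htk. pose proof (p_le _ _ _ _ _ _ H (S k) j ltac:(lia) ltac:(lia)). lra. }
      pose proof (endval _ _ _ _ _ _ k tk H ltac:(lia) Htk Hctk) as EV.
      destruct (Nat.eq_dec k i) as [->|Hki].
      - rewrite <- EV, (Hf i Hi s Hsi). pose proof (HL i Hi). nra.
      - pose proof (p_le _ _ _ _ _ _ H 0 k ltac:(lia) ltac:(lia)).
        pose proof (p_lt _ _ _ _ _ _ H k n ltac:(lia) ltac:(lia)).
        destruct (I_ex (r:=r) (p k) ltac:(lra)) as [tk' Htk'].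
        specialize (IHk ltac:(lia) ltac:(lia) tk' Htk').
        pose proof (Hinc k ltac:(lia)). pose proof (HL k ltac:(lia)).
        rewrite (Hf k ltac:(lia) tk' ltac:(lra)) in IHk. rewrite <- EV. nra. }
    pose proof (p_le _ _ _ _ _ _ H 0 j ltac:(lia) ltac:(lia)).
    pose proof (p_lt _ _ _ _ _ _ H j n ltac:(lia) ltac:(lia)).
    destruct (I_ex (r:=r) (p j) ltac:(lra)) as [tj Htj'].
    specialize (KA j Hij ltac:(lia) tj Htj').
    rewrite (Hf j Hj tj ltac:(lra)) in KA. rewrite (Hf j Hj t Htj). pose proof (HL j Hj). nra.
  - subst j. rewrite (Hf i Hi s Hsi), (Hf i Hi t Htj). pose proof (HL i Hi). nra.
  - pose proof (p_le _ _ _ _ _ _ H (S j) i ltac:(lia) ltac:(lia)). lra.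
Qed.

Lemma mono_surj_cont {r} (f : I r -> I r) :
  (forall s t : I r, proj1_sig s <= proj1_sig t -> proj1_sig (f s) <= proj1_sig (f t)) ->
  (forall y, exists x, f x = y) -> forall t, cont_at f t.
Proof.
  intros Hm Hs t eps He. set (v := proj1_sig (f t)).
  pose proof (I_bnd (f t)) as Bv. fold v in Bv.
  assert (Lo : exists d1, 0 < d1 /\ forall s : I r, proj1_sig t - d1 < proj1_sig s -> v - eps/2 <= proj1_sig (f s)).
  { destruct (Rle_lt_dec 0 (v - eps/2)).
    - destruct (I_ex (r:=r) (v - eps/2) ltac:(lra)) as [y Hy].
      destruct (Hs y) as [x1 Hx1].
      assert (proj1_sig x1 < proj1_sig t).
      { destruct (Rlt_le_dec (proj1_sig x1) (proj1_sig t)); auto.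
        specialize (Hm t x1 r1). rewrite Hx1, Hy in Hm. fold v in Hm. lra. }
      exists (proj1_sig t - proj1_sig x1); split. lra.
      intros s Hs'. rewrite <- Hy, <- Hx1. apply Hm. lra.
    - exists 1; split. lra. intros s _. pose proof (I_bnd (f s)). lra. }
  assert (Hi : exists d2, 0 < d2 /\ forall s : I r, proj1_sig s < proj1_sig t + d2 -> proj1_sig (f s) <= v + eps/2).
  { destruct (Rlt_le_dec (v + eps/2) r).
    - destruct (I_ex (r:=r) (v + eps/2) ltac:(lra)) as [y Hy].
      destruct (Hs y) as [x2 Hx2].
      assert (proj1_sig t < proj1_sig x2).
      { destruct (Rlt_le_dec (proj1_sig t) (proj1_sig x2)); auto.
        specialize (Hm x2 t r1). rewrite Hx2, Hy in Hm. fold v in Hm. lra. }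
      exists (proj1_sig x2 - proj1_sig t); split. lra.
      intros s Hs'. rewrite <- Hy, <- Hx2. apply Hm. lra.
    - exists 1; split. lra. intros s _. pose proof (I_bnd (f s)). lra. }
  destruct Lo as [d1 [Hd1 L]]. destruct Hi as [d2 [Hd2 U]].
  exists (Rmin d1 d2); split. apply Rmin_pos; auto.
  intros s Hst. pose proof (Rlt_le_trans _ _ _ Hst (Rmin_l _ _)) as Hs1.
  pose proof (Rlt_le_trans _ _ _ Hst (Rmin_r _ _)) as Hs2.
  apply Rabs_def2 in Hs1. apply Rabs_def2 in Hs2.
  specialize (L s ltac:(lra)). specialize (U s ltac:(lra)). fold v. apply Rabs_def1; lra.
Qed.

Lemma L1 r n p lam c (g h hinv : I r -> I r) lo hi : PAd r n p lam c g ->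
  (forall t, cont_at h t) -> (forall t, cont_at hinv t) -> (forall t, hinv (h t) = t) ->
  (forall t, h (g t) = g (h t)) ->
  (forall t : I r, lo < proj1_sig t < hi -> proj1_sig t < proj1_sig (h t) < hi) ->
  forall t : I r, lo < proj1_sig t < hi -> cont_at g t.
Proof.
  intros H Hh Hhi Hinv Hcom Hsup.
  assert (Step : forall t, cont_at g (h t) -> cont_at g t).
  { intros t Hc. apply (cont_ext g (fun s => hinv (g (h s)))).
    { intros s. rewrite <- Hcom. rewrite Hinv. reflexivity. }
    apply (cont_comp (fun s => g (h s)) hinv). apply (cont_comp h g); auto.
    auto. }
  assert (Q : forall d j, (j + d = n)%nat -> forall t : I r, p j <= proj1_sig t -> lo < proj1_sig t < hi -> cont_at g t).
  { induction d; intros j Hj t Ht Hlh.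
    - replace j with n in Ht by lia. pose proof (I_bnd t). destruct H as (_ & Hpn & _). lra.
    - destruct (Rle_lt_dec (p (S j)) (proj1_sig t)).
      + apply (IHd (S j)); auto. lia.
      + destruct (Rlt_le_dec (p j) (proj1_sig t)).
        * apply (cont_interior _ _ _ _ _ _ j t H ltac:(lia)); lra.
        * apply Step. destruct (Hsup t Hlh) as [S1 S2].
          destruct (Rle_lt_dec (p (S j)) (proj1_sig (h t))).
          -- apply (IHd (S j)); auto. lia. lra.
          -- apply (cont_interior _ _ _ _ _ _ j (h t) H ltac:(lia)); lra. }
  intros t Ht. apply (Q n 0%nat); auto. destruct H as (Hp0 & _). rewrite Hp0. apply I_bnd.
Qed.

Lemma endpoint r n p lam c (g : I r -> I r) (e : I r) lo1 hi2 : PAd r n p lam c g ->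
  (forall y, exists x, g x = y) ->
  0 < proj1_sig e -> 0 <= lo1 < proj1_sig e -> proj1_sig e < hi2 ->
  (forall x, lo1 < proj1_sig (g x) < proj1_sig e <-> lo1 < proj1_sig x < proj1_sig e) ->
  (forall x, proj1_sig e < proj1_sig (g x) < hi2 <-> proj1_sig e < proj1_sig x < hi2) ->
  (forall u : I r, lo1 < proj1_sig u < proj1_sig e -> cont_at g u) ->
  (forall u : I r, proj1_sig e < proj1_sig u < hi2 -> cont_at g u) -> cont_at g e.
Proof.
  intros H Hsurj He0 Hlo Hhi R1 R2 C1 C2.
  destruct (piece_ex _ _ _ _ _ _ H e) as [i [Hi Hei]].
  destruct (Rlt_le_dec (p i) (proj1_sig e)).
  { apply (cont_interior _ _ _ _ _ _ i e H Hi Hei); auto. }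
  pose proof H as (Hp0 & Hpn & Hinc & HL & Hf).
  destruct i as [|j]. { lra. }
  assert (Hpe : p (S j) = proj1_sig e) by lra.
  set (E := proj1_sig e) in *.
  pose proof (Hinc j ltac:(lia)) as Pj. pose proof (Hinc (S j) Hi) as PSj.
  pose proof (HL j ltac:(lia)) as Lj. pose proof (HL (S j) Hi) as LSj.
  pose proof (p_le _ _ _ _ _ _ H 0 j ltac:(lia) ltac:(lia)) as Pj0.
  pose proof (p_le _ _ _ _ _ _ H (S (S j)) n ltac:(lia) ltac:(lia)) as Pn.
  assert (Hge : proj1_sig (g e) = lam (S j) * E + c (S j)) by (apply Hf; auto; lra).
  assert (A1 : E <= proj1_sig (g e)).
  { apply Rnot_lt_le; intro Hlt.
    set (d := Rmin (Rmin (p (S (S j)) - E) (hi2 - E)) ((E - proj1_sig (g e)) / lam (S j)) / 2).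
    assert (Hd : 0 < d).
    { unfold d. apply Rdiv_lt_0_compat; [|lra]. apply Rmin_pos; [apply Rmin_pos; lra|].
      apply Rdiv_lt_0_compat; lra. }
    pose proof (Rmin_l (Rmin (p (S (S j)) - E) (hi2 - E)) ((E - proj1_sig (g e)) / lam (S j))).
    pose proof (Rmin_r (Rmin (p (S (S j)) - E) (hi2 - E)) ((E - proj1_sig (g e)) / lam (S j))).
    pose proof (Rmin_l (p (S (S j)) - E) (hi2 - E)). pose proof (Rmin_r (p (S (S j)) - E) (hi2 - E)).
    fold d in H0, H1.
    destruct (I_ex (r:=r) (E + d) ltac:(unfold d in *; lra)) as [s Hs].
    assert (Hgs := Hf (S j) Hi s ltac:(unfold d in *; lra)).
    assert (Hr2 := proj2 (R2 s) ltac:(unfold d in *; lra)).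
    assert (lam (S j) * d <= lam (S j) * ((E - proj1_sig (g e)) / lam (S j) / 2)) by (apply Rmult_le_compat_l; unfold d in *; lra).
    replace (lam (S j) * ((E - proj1_sig (g e)) / lam (S j) / 2)) with ((E - proj1_sig (g e))/2) in H4 by (field; lra).
    rewrite Hs in Hgs. lra. }
  assert (A2 : proj1_sig (g e) <= E).
  { apply Rnot_lt_le; intro Hlt.
    set (y := E + Rmin (proj1_sig (g e) - E) (hi2 - E) / 2).
    pose proof (Rmin_l (proj1_sig (g e) - E) (hi2 - E)). pose proof (Rmin_r (proj1_sig (g e) - E) (hi2 - E)).
    assert (0 < Rmin (proj1_sig (g e) - E) (hi2 - E)) by (apply Rmin_pos; lra).
    pose proof (I_bnd (g e)).
    destruct (I_ex (r:=r) y ltac:(unfold y; lra)) as [yy Hyy].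
    destruct (Hsurj yy) as [x Hx].
    assert (Hr := proj1 (R2 x) ltac:(rewrite Hx, Hyy; unfold y; lra)).
    assert (M := mono _ _ _ _ _ _ H e x ltac:(fold E; lra)
                   ltac:(intros u Hu; apply C2; fold E in Hu; lra)).
    rewrite Hx, Hyy in M. unfold y in M. lra. }
  assert (GE : proj1_sig (g e) = E) by lra.
  set (L := lam j * E + c j).
  assert (B1 : L <= E).
  { apply Rnot_lt_le; intro Hlt.
    set (d := Rmin (Rmin (E - p j) (E - lo1)) ((L - E) / lam j) / 2).
    assert (Hd : 0 < d).
    { unfold d. apply Rdiv_lt_0_compat; [|lra]. apply Rmin_pos; [apply Rmin_pos; lra|].
      apply Rdiv_lt_0_compat; lra. }
    pose proof (Rmin_l (Rmin (E - p j) (E - lo1)) ((L - E) / lam j)).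
    pose proof (Rmin_r (Rmin (E - p j) (E - lo1)) ((L - E) / lam j)).
    pose proof (Rmin_l (E - p j) (E - lo1)). pose proof (Rmin_r (E - p j) (E - lo1)).
    fold d in H0, H1.
    destruct (I_ex (r:=r) (E - d) ltac:(unfold d in *; lra)) as [s Hs].
    assert (Hgs := Hf j ltac:(lia) s ltac:(unfold d in *; lra)).
    assert (Hr1 := proj2 (R1 s) ltac:(unfold d in *; lra)).
    assert (lam j * d <= lam j * ((L - E) / lam j / 2)) by (apply Rmult_le_compat_l; unfold d in *; lra).
    replace (lam j * ((L - E) / lam j / 2)) with ((L - E)/2) in H4 by (field; lra).
    rewrite Hs in Hgs. unfold L in *. lra. }
  assert (B2 : E <= L).
  { apply Rnot_lt_le; intro Hlt.
    set (y := E - Rmin (E - L) (E - lo1) / 2).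
    pose proof (Rmin_l (E - L) (E - lo1)). pose proof (Rmin_r (E - L) (E - lo1)).
    assert (0 < Rmin (E - L) (E - lo1)) by (apply Rmin_pos; lra).
    destruct (I_ex (r:=r) y ltac:(unfold y; lra)) as [yy Hyy].
    destruct (Hsurj yy) as [x Hx].
    assert (Hr := proj1 (R1 x) ltac:(rewrite Hx, Hyy; unfold y; lra)).
    set (sr := E - Rmin (E - proj1_sig x) (E - p j) / 2).
    pose proof (Rmin_l (E - proj1_sig x) (E - p j)). pose proof (Rmin_r (E - proj1_sig x) (E - p j)).
    assert (0 < Rmin (E - proj1_sig x) (E - p j)) by (apply Rmin_pos; lra).
    destruct (I_ex (r:=r) sr ltac:(unfold sr; lra)) as [s Hs].
    assert (M := mono _ _ _ _ _ _ H x s ltac:(rewrite Hs; unfold sr; lra)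
                   ltac:(intros u Hu; apply C1; rewrite Hs in Hu; unfold sr in Hu; lra)).
    assert (Hgs := Hf j ltac:(lia) s ltac:(rewrite Hs; unfold sr; lra)).
    rewrite Hx, Hyy, Hgs, Hs in M. unfold y, sr, L in *.
    assert (lam j * (E - Rmin (E - proj1_sig x) (E - p j) / 2) < lam j * E).
    { apply Rmult_lt_compat_l; lra. }
    lra. }
  apply (cont_break _ _ _ _ _ _ j e H Hi); auto. fold E. rewrite GE, Hpe. fold L. lra.
Qed.

Definition goodmap {r : R} (f : I r -> I r) : Prop :=
  (forall t, cont_at f t) /\
  (forall s t : I r, proj1_sig s <= proj1_sig t -> proj1_sig (f s) <= proj1_sig (f t)).

Lemma finv_props {r} (f : I r -> I r) : is_bij f ->
  (forall x, f (finv f x) = x) /\ (forall x, finv f (f x) = x).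
Proof.
  intros [y [Hy1 Hy2]].
  assert (A : forall x, f (finv f x) = x).
  { intros x. unfold finv. apply (epsilon_spec (inhabits x) (fun z => f z = x)). exists (y x); auto. }
  split; auto. intros x. rewrite <- (Hy1 (finv f (f x))), A. auto.
Qed.

Lemma good_comp {r} (f g : I r -> I r) : goodmap f -> goodmap g -> goodmap (fun t => g (f t)).
Proof.
  intros [Cf Mf] [Cg Mg]; split.
  - intros t. apply cont_comp; auto.
  - intros s t H. auto.
Qed.

Lemma good_iter {r} (f : I r -> I r) : goodmap f -> forall n, goodmap (Nat.iter n f).
Proof.
  intros Hf n. induction n.
  - split. intros t; apply cont_id. intros s t H; exact H.
  - simpl. apply (good_comp (Nat.iter n f) f); auto.
Qed.

Lemma strict_of {r} (f g : I r -> I r) : goodmap f -> (forall x, g (f x) = x) ->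
  forall s t : I r, proj1_sig s < proj1_sig t -> proj1_sig (f s) < proj1_sig (f t).
Proof.
  intros [_ Mf] Hg s t H. pose proof (Mf s t ltac:(lra)).
  destruct (Req_dec (proj1_sig (f s)) (proj1_sig (f t))) as [E|E]; [|lra].
  apply I_eq in E. apply (f_equal g) in E. rewrite !Hg in E. subst; lra.
Qed.

Lemma good_finv {r} (f : I r -> I r) : is_bij f -> goodmap f -> goodmap (finv f).
Proof.
  intros Hb Hg. destruct (finv_props f Hb) as [A B].
  assert (M : forall s t : I r, proj1_sig s <= proj1_sig t -> proj1_sig (finv f s) <= proj1_sig (finv f t)).
  { intros s t H. apply Rnot_lt_le. intro Hlt.
    pose proof (proj2 Hg _ _ (Rlt_le _ _ Hlt)). rewrite !A in H0.
    assert (proj1_sig s = proj1_sig t) by lra. apply I_eq in H1. subst. lra. }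
  split; auto. apply mono_surj_cont; auto. intros y. exists (f y); auto.
Qed.

Lemma iter_inv {T} (F G : T -> T) : (forall x, G (F x) = x) -> forall n x, Nat.iter n G (Nat.iter n F x) = x.
Proof.
  intros H n. induction n; intros x. reflexivity.
  rewrite (Nat.iter_succ_r n _ F x), Nat.iter_succ, IHn. auto.
Qed.

Lemma zpow_pos {T} (f : T -> T) n x : zpow f (Z.of_nat n) x = Nat.iter n f x.
Proof. destruct n. reflexivity. simpl. rewrite SuccNat2Pos.id_succ. reflexivity. Qed.

Lemma zpow_neg {T} (f : T -> T) n x : zpow f (- Z.of_nat n) x = Nat.iter n (finv f) x.
Proof. destruct n. reflexivity. simpl. rewrite SuccNat2Pos.id_succ. reflexivity. Qed.

Lemma Z_cases (k : Z) : (exists n, k = Z.of_nat n) \/ (exists n, k = (- Z.of_nat (S n))%Z).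
Proof.
  destruct (Z_le_gt_dec 0 k).
  - left. exists (Z.to_nat k). rewrite Z2Nat.id; lia.
  - right. exists (Z.to_nat (- k - 1)). rewrite Nat2Z.inj_succ, Z2Nat.id; lia.
Qed.

Lemma zpow_good {r} (a : I r -> I r) : is_bij a -> goodmap a -> forall k, goodmap (zpow a k).
Proof.
  intros Hb Hg k. pose proof (good_finv a Hb Hg) as Hg'.
  destruct (Z_cases k) as [[n ->]|[n ->]].
  - assert (E : zpow a (Z.of_nat n) = Nat.iter n a).
    { apply functional_extensionality; intros x; apply zpow_pos. }
    rewrite E. apply good_iter; auto.
  - assert (E : zpow a (- Z.of_nat (S n)) = Nat.iter (S n) (finv a)).
    { apply functional_extensionality; intros x; apply zpow_neg. }
    rewrite E. apply good_iter; auto.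
Qed.

Lemma zpow_inv {r} (a : I r -> I r) : is_bij a -> forall k x,
  zpow a (- k) (zpow a k x) = x /\ zpow a k (zpow a (- k) x) = x.
Proof.
  intros Hb k x. destruct (finv_props a Hb) as [A B].
  destruct (Z_cases k) as [[n ->]|[n ->]].
  - rewrite !zpow_neg, !zpow_pos. split; apply iter_inv; auto.
  - rewrite Z.opp_involutive, !zpow_pos, !zpow_neg. split; apply iter_inv; auto.
Qed.

Lemma zpow_shift {r} (a : I r -> I r) : is_bij a -> forall k x,
  zpow a (k + 1) x = zpow a k (a x).
Proof.
  intros Hb k x. destruct (finv_props a Hb) as [A B].
  destruct (Z_cases k) as [[n ->]|[n ->]].
  - replace (Z.of_nat n + 1)%Z with (Z.of_nat (S n)) by lia.
    rewrite !zpow_pos. apply Nat.iter_succ_r.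
  - replace (- Z.of_nat (S n) + 1)%Z with (- Z.of_nat n)%Z by lia.
    rewrite !zpow_neg, Nat.iter_succ_r, B. reflexivity.
Qed.

Lemma conj_facts {r} (b P Q : I r -> I r) (x0 x1 : I r) :
  is_bij b -> goodmap b -> (forall t, proj1_sig t <= proj1_sig (b t)) ->
  (forall t, b t <> t <-> proj1_sig x0 < proj1_sig t < proj1_sig x1) ->
  goodmap P -> goodmap Q -> (forall x, Q (P x) = x) -> (forall x, P (Q x) = x) ->
  (forall t, cont_at (fun t => P (b (Q t))) t) /\
  (exists hinv : I r -> I r, (forall t, cont_at hinv t) /\ forall t, hinv (P (b (Q t))) = t) /\
  (forall t : I r, proj1_sig (P x0) < proj1_sig t < proj1_sig (P x1) ->
     proj1_sig t < proj1_sig (P (b (Q t))) < proj1_sig (P x1)) /\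
  (forall t, P (b (Q t)) <> t -> proj1_sig (P x0) < proj1_sig t < proj1_sig (P x1)).
Proof.
  intros Hb Gb Hup Hs GP GQ QP PQ.
  destruct (finv_props b Hb) as [A B].
  pose proof (good_finv b Hb Gb) as Gbi.
  split; [|split; [|split]].
  - intros t. apply (cont_comp (fun t => b (Q t)) P). apply (cont_comp Q b).
    apply GQ. apply Gb. apply GP.
  - exists (fun t => P (finv b (Q t))). split.
    + intros t. apply (cont_comp (fun t => finv b (Q t)) P). apply (cont_comp Q (finv b)).
      apply GQ. apply Gbi. apply GP.
    + intros t. rewrite QP, B, PQ. reflexivity.
  - intros t [H1 H2].
    assert (Q1 : proj1_sig x0 < proj1_sig (Q t)).
    { apply Rnot_le_lt; intro Hle. pose proof (proj2 GP _ _ Hle). rewrite PQ in H. lra. }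
    assert (Q2 : proj1_sig (Q t) < proj1_sig x1).
    { apply Rnot_le_lt; intro Hle. pose proof (proj2 GP _ _ Hle). rewrite PQ in H. lra. }
    assert (N : b (Q t) <> Q t) by (apply Hs; lra).
    assert (B1 : proj1_sig (Q t) < proj1_sig (b (Q t))).
    { pose proof (Hup (Q t)). destruct (Req_dec (proj1_sig (Q t)) (proj1_sig (b (Q t)))) as [E|E]; [|lra].
      apply I_eq in E. congruence. }
    assert (Fx1 : b x1 = x1).
    { apply NNPP; intro Hn. apply Hs in Hn. lra. }
    assert (B2 : proj1_sig (b (Q t)) < proj1_sig x1).
    { pose proof (strict_of b (finv b) Gb B (Q t) x1 Q2). rewrite Fx1 in H. exact H. }
    pose proof (strict_of P Q GP QP _ _ B1). pose proof (strict_of P Q GP QP _ _ B2).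
    rewrite PQ in H. split; auto.
  - intros t Hne. apply NNPP; intro Hn. apply Hne.
    assert (E : b (Q t) = Q t).
    { apply NNPP; intro Hn2. apply Hs in Hn2. apply Hn.
      pose proof (strict_of P Q GP QP x0 (Q t) ltac:(lra)).
      pose proof (strict_of P Q GP QP (Q t) x1 ltac:(lra)). rewrite PQ in *. lra. }
    rewrite E, PQ. reflexivity.
Qed.

Lemma range_lem {r} (g h : I r -> I r) lo hi : (forall x y, g x = g y -> x = y) ->
  (forall t, h (g t) = g (h t)) ->
  (forall t : I r, lo < proj1_sig t < hi -> proj1_sig t < proj1_sig (h t)) ->
  (forall t, h t <> t -> lo < proj1_sig t < hi) ->
  forall x, lo < proj1_sig (g x) < hi <-> lo < proj1_sig x < hi.
Proof.
  intros Hinj Hc H1 H2 x. split; intro H.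
  - apply H2. intro E. pose proof (H1 (g x) H). rewrite Hc, E in H0. lra.
  - apply H2. intro E. rewrite Hc in E. apply Hinj in E.
    pose proof (H1 x H). rewrite E in H0. lra.
Qed.

Lemma cv_shift (u : nat -> R) l : Un_cv u l -> Un_cv (fun n => u (S n)) l.
Proof.
  intros H eps He. destruct (H eps He) as [N HN]. exists N. intros n Hn. apply HN. lia.
Qed.

Lemma cv_cont {r} (a : I r -> I r) (x : nat -> I r) (l : I r) : cont_at a l ->
  Un_cv (fun n => proj1_sig (x n)) (proj1_sig l) ->
  Un_cv (fun n => proj1_sig (a (x n))) (proj1_sig (a l)).
Proof.
  intros Hc Hcv eps He. destruct (Hc eps He) as [d [Hd Hdd]].
  destruct (Hcv d Hd) as [N HN]. exists N. intros n Hn. apply Hdd. apply HN; auto.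
Qed.

Lemma tiling {r} (a : I r -> I r) (x0 : I r) : is_bij a -> goodmap a ->
  (forall t, proj1_sig t <= proj1_sig (a t)) ->
  (forall t, a t <> t <-> 0 < proj1_sig t < r) -> 0 < proj1_sig x0 ->
  forall t : I r, 0 < proj1_sig t -> exists k,
    proj1_sig (zpow a k x0) <= proj1_sig t < proj1_sig (zpow a (k + 1) x0).
Proof.
  intros Hb Ga Hup Hs Hx0 t Ht.
  destruct (finv_props a Hb) as [A B].
  assert (Fw : exists N : nat, proj1_sig t < proj1_sig (Nat.iter N a x0)).
  { apply NNPP; intro Hn.
    assert (Hle : forall N, proj1_sig (Nat.iter N a x0) <= proj1_sig t).
    { intros N. apply Rnot_lt_le. intro. apply Hn. exists N; auto. }
    set (u := fun n => proj1_sig (Nat.iter n a x0)).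
    assert (Gu : Un_growing u). { intros n. unfold u. rewrite Nat.iter_succ. apply Hup. }
    destruct (growing_cv u Gu) as [l Hl].
    { exists (proj1_sig t). intros x [i ->]. apply Hle. }
    pose proof (growing_ineq u l Gu Hl 0%nat) as L0. unfold u in L0. simpl in L0.
    assert (Lt : l <= proj1_sig t).
    { apply Rnot_lt_le; intro Hlt. destruct (Hl (l - proj1_sig t) ltac:(lra)) as [N HN].
      specialize (HN N (le_n N)). specialize (Hle N). unfold u, Rdist in HN.
      apply Rabs_def2 in HN. lra. }
    pose proof (I_bnd t).
    destruct (I_ex (r:=r) l ltac:(lra)) as [lI HlI].
    rewrite <- HlI in Hl.
    pose proof (cv_cont a (fun n => Nat.iter n a x0) lI (proj1 Ga lI) Hl) as C1.
    pose proof (cv_shift u _ Hl) as C2. unfold u in C2.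
    assert (C1' : Un_cv (fun n => proj1_sig (Nat.iter (S n) a x0)) (proj1_sig (a lI))).
    { intros eps He. destruct (C1 eps He) as [N0 HN0]. exists N0. intros n Hn0. rewrite Nat.iter_succ. auto. }
    pose proof (UL_sequence _ _ _ C1' C2) as E. apply I_eq in E.
    revert E. apply Hs. lra. }
  assert (Bw : exists M : nat, proj1_sig (Nat.iter M (finv a) x0) <= proj1_sig t).
  { apply NNPP; intro Hn.
    assert (Hle : forall N, proj1_sig t < proj1_sig (Nat.iter N (finv a) x0)).
    { intros N. apply Rnot_le_lt. intro. apply Hn. exists N; auto. }
    set (u := fun n => proj1_sig (Nat.iter n (finv a) x0)).
    assert (Gu : Un_decreasing u).
    { intros n. unfold u. rewrite Nat.iter_succ.
      pose proof (Hup (finv a (Nat.iter n (finv a) x0))). rewrite A in H. exact H. }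
    destruct (decreasing_cv u Gu) as [l Hl].
    { exists (- proj1_sig t). intros x [i ->]. unfold opp_seq. specialize (Hle i). unfold u. lra. }
    pose proof (decreasing_ineq u l Gu Hl 0%nat) as L0. unfold u in L0. simpl in L0.
    assert (Lt : proj1_sig t <= l).
    { apply Rnot_lt_le; intro Hlt. destruct (Hl (proj1_sig t - l) ltac:(lra)) as [N HN].
      specialize (HN N (le_n N)). specialize (Hle N). unfold u, Rdist in HN.
      apply Rabs_def2 in HN. lra. }
    pose proof (I_bnd x0).
    destruct (I_ex (r:=r) l ltac:(lra)) as [lI HlI].
    rewrite <- HlI in Hl.
    pose proof (cv_shift u _ Hl) as C2. unfold u in C2.
    pose proof (cv_cont a (fun n => Nat.iter (S n) (finv a) x0) lI (proj1 Ga lI) C2) as C1.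
    assert (C1' : Un_cv (fun n => proj1_sig (Nat.iter n (finv a) x0)) (proj1_sig (a lI))).
    { intros eps He. destruct (C1 eps He) as [N0 HN]. exists N0. intros n Hn0.
      specialize (HN n Hn0). simpl in HN. rewrite A in HN. auto. }
    pose proof (UL_sequence _ _ _ C1' Hl) as E. apply I_eq in E.
    revert E. apply Hs. lra. }
  destruct Fw as [N HN]. destruct Bw as [M HM].
  set (al := fun k => proj1_sig (zpow a k x0)).
  assert (S : forall m : nat, al (- Z.of_nat M)%Z <= proj1_sig t -> proj1_sig t < al (- Z.of_nat M + Z.of_nat m)%Z ->
     exists k, al k <= proj1_sig t < al (k + 1)%Z).
  { induction m; intros H1 H2.
    - rewrite Z.add_0_r in H2. lra.
    - destruct (Rlt_le_dec (proj1_sig t) (al (- Z.of_nat M + Z.of_nat m)%Z)).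
      + apply IHm; auto.
      + exists (- Z.of_nat M + Z.of_nat m)%Z. split; auto.
        replace (- Z.of_nat M + Z.of_nat m + 1)%Z with (- Z.of_nat M + Z.of_nat (S m))%Z by lia. auto. }
  destruct (S (M + N)%nat) as [k Hk].
  - unfold al. rewrite zpow_neg. auto.
  - unfold al. replace (- Z.of_nat M + Z.of_nat (M + N))%Z with (Z.of_nat N) by lia.
    rewrite zpow_pos. auto.
  - exists k. exact Hk.
Qed.

Lemma commute_pt {r} (g h : I r -> I r) : commute g h -> forall t, h (g t) = g (h t).
Proof. intros Hc t. exact (f_equal (fun F => F t) Hc). Qed.

Lemma cont_zero {r} n p lam c (g : I r -> I r) t : PAd r n p lam c g -> proj1_sig t = 0 -> cont_at g t.
Proof.
  intros H Ht. destruct (piece_ex _ _ _ _ _ _ H t) as [i [Hi Hti]].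
  apply (cont_interior _ _ _ _ _ _ i t H Hi Hti); auto.
Qed.

Theorem lemma4p7 (r : R) (hr : 0 < r) (Lam A : R -> Prop)
  (hLam : good_Lam Lam) (hA : good_A r Lam A)
  (a b : I r -> I r) (alpha0 : I r)
  (ha : inFup r Lam A a) (hsa : supp_eq a 0 r)
  (hal0 : 0 < proj1_sig alpha0) (hal0A : A (proj1_sig alpha0))
  (hb : inFup r Lam A b)
  (hsb : supp_eq b (proj1_sig alpha0) (proj1_sig (zpow a 1%Z alpha0)))
  (G : (I r -> I r) -> Prop) (hG : subgroupV r G)
  (hGF : forall x, (G x /\ inF r Rpos Rall x) <-> inF r Lam A x) :
  (forall g, (G g /\ commute g a) <-> (inF r Lam A g /\ commute g a)) /\
  (forall g,
     (G g /\ forall k : Z, commute g (rmul (rmul (zpow a (- k)) b) (zpow a k))) <->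
     (inF r Lam A g /\ forall k : Z, commute g (rmul (rmul (zpow a (- k)) b) (zpow a k)))).
Proof.
  destruct hLam as [HLpos _].
  destruct ha as [[[Hba HPa] Hca] Hupa].
  destruct hb as [[[Hbb HPb] Hcb] Hupb].
  assert (Ga : goodmap a).
  { split; [exact Hca|]. destruct (PA_PAd _ _ _ _ HPa HLpos) as (n & p & lam & c & H).
    intros s t Hst. apply (mono _ _ _ _ _ _ H); auto. intros u _; exact (Hca u). }
  assert (Gb : goodmap b).
  { split; [exact Hcb|]. destruct (PA_PAd _ _ _ _ HPb HLpos) as (n & p & lam & c & H).
    intros s t Hst. apply (mono _ _ _ _ _ _ H); auto. intros u _; exact (Hcb u). }
  destruct (finv_props a Hba) as [Aa Ba].
  pose proof (good_finv a Hba Ga) as Gai.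
  assert (Fin : forall g, G g -> (forall t, cont_at g t) -> inF r Lam A g).
  { intros g Hg Hc. apply hGF. split; auto. split; auto. apply (proj1 hG); auto. }
  assert (Gdata : forall g, G g -> is_bij g /\ exists n p lam c, PAd r n p lam c g).
  { intros g Hg. destruct (proj1 hG g Hg) as [Hbg HPg]. split; auto.
    apply (PA_PAd _ _ _ _ HPg). intros l Hl; exact Hl. }
  split.
  - intros g. split.
    + intros [Hg Hc]. split; auto. apply Fin; auto.
      destruct (Gdata g Hg) as [_ (n & p & lam & c & H)].
      intros t. destruct (Req_dec (proj1_sig t) 0) as [E|E].
      { apply (cont_zero _ _ _ _ _ _ H E). }
      pose proof (I_bnd t).
      apply (L1 _ _ _ _ _ g a (finv a) 0 r H (proj1 Ga) (proj1 Gai) Ba (commute_pt _ _ Hc)).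
      * intros s Hs. split; [|apply I_bnd].
        pose proof (Hupa s). destruct (Req_dec (proj1_sig s) (proj1_sig (a s))) as [E'|E']; [|lra].
        apply I_eq in E'. exfalso. apply (proj2 (hsa s) Hs). auto.
      * lra.
    + intros [Hg Hc]. split; auto. apply hGF; auto.
  - intros g. split.
    + intros [Hg Hc]. split; auto. apply Fin; auto.
      destruct (Gdata g Hg) as [[gi [Hgi1 Hgi2]] (n & p & lam & c & H)].
      assert (Ginj : forall x y, g x = g y -> x = y).
      { intros x y E. rewrite <- (Hgi1 x), <- (Hgi1 y), E. auto. }
      assert (Gsurj : forall y, exists x, g x = y) by (intros y; exists (gi y); auto).
      assert (Ha1 : zpow a 1%Z alpha0 = a alpha0) by reflexivity.
      rewrite Ha1 in hsb.
      assert (Hlt01 : proj1_sig alpha0 < proj1_sig (a alpha0)).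
      { pose proof (Hupa alpha0). pose proof (I_bnd alpha0).
        destruct (Req_dec (proj1_sig alpha0) (proj1_sig (a alpha0))) as [E'|E']; [|lra].
        apply I_eq in E'. exfalso. apply (proj2 (hsa alpha0)); [lra | symmetry; exact E']. }
      assert (CF : forall k,
        (forall t, cont_at (fun t => zpow a k (b (zpow a (- k) t))) t) /\
        (exists hinv : I r -> I r, (forall t, cont_at hinv t) /\ forall t, hinv (zpow a k (b (zpow a (- k) t))) = t) /\
        (forall t : I r, proj1_sig (zpow a k alpha0) < proj1_sig t < proj1_sig (zpow a k (a alpha0)) ->
           proj1_sig t < proj1_sig (zpow a k (b (zpow a (- k) t))) < proj1_sig (zpow a k (a alpha0))) /\
        (forall t, zpow a k (b (zpow a (- k) t)) <> t -> proj1_sig (zpow a k alpha0) < proj1_sig t < proj1_sig (zpow a k (a alpha0)))).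
      { intros k. apply conj_facts; auto; try apply zpow_good; auto.
        intros x; apply (zpow_inv a Hba k x). intros x; apply (zpow_inv a Hba k x). }
      assert (CON : forall k (t : I r), proj1_sig (zpow a k alpha0) < proj1_sig t < proj1_sig (zpow a k (a alpha0)) -> cont_at g t).
      { intros k t Ht. destruct (CF k) as (C1 & (hinv & C2 & C3) & C4 & C5).
        exact (L1 _ _ _ _ _ g _ hinv (proj1_sig (zpow a k alpha0)) (proj1_sig (zpow a k (a alpha0))) H C1 C2 C3 (fun s => commute_pt _ _ (Hc k) s) C4 t Ht). }
      assert (RNG : forall k x, proj1_sig (zpow a k alpha0) < proj1_sig (g x) < proj1_sig (zpow a k (a alpha0)) <->
                                proj1_sig (zpow a k alpha0) < proj1_sig x < proj1_sig (zpow a k (a alpha0))).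
      { intros k x. destruct (CF k) as (C1 & _ & C4 & C5).
        apply (range_lem g (fun t => zpow a k (b (zpow a (- k) t)))); auto.
        - intros s. exact (commute_pt _ _ (Hc k) s).
        - intros t Ht. apply (C4 t Ht). }
      assert (STR : forall k, proj1_sig (zpow a k alpha0) < proj1_sig (zpow a k (a alpha0))).
      { intros k. apply (strict_of _ (zpow a (- k)) (zpow_good a Hba Ga k)); auto.
        intros x; apply (zpow_inv a Hba k x). }
      intros t. destruct (Req_dec (proj1_sig t) 0) as [E|E].
      { apply (cont_zero _ _ _ _ _ _ H E). }
      pose proof (I_bnd t).
      destruct (tiling a alpha0 Hba Ga Hupa hsa hal0 t ltac:(lra)) as [k Hk].
      rewrite zpow_shift in Hk by auto.
      destruct (Rle_lt_or_eq_dec _ _ (proj1 Hk)) as [Hlt|Heq].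
      * apply (CON k). lra.
      * assert (Ek : zpow a (k - 1) (a alpha0) = zpow a k alpha0).
        { rewrite <- zpow_shift by auto. f_equal. lia. }
        pose proof (STR (k - 1)%Z) as S1. rewrite Ek in S1.
        pose proof (I_bnd (zpow a (k - 1) alpha0)).
        apply (endpoint _ _ _ _ _ g t (proj1_sig (zpow a (k - 1) alpha0)) (proj1_sig (zpow a k (a alpha0))) H Gsurj).
        -- lra.
        -- lra.
        -- lra.
        -- intros x. rewrite <- Heq. pose proof (RNG (k - 1)%Z x) as R. rewrite Ek in R. exact R.
        -- intros x. rewrite <- Heq. apply RNG.
        -- intros u Hu. apply (CON (k - 1)%Z). rewrite Ek. lra.
        -- intros u Hu. apply (CON k). lra.
    + intros [Hg Hc]. split; auto. apply hGF; auto.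
Qed.
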